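(* Let $t=\lceil\frac{n-\kappa}{2}\rceil$ and $\mathrm{Small}(x)=\mathrm{Small}_t(x)$. Let $u\ne v$ be vertices with $\kappa(u,v)=\kappa$. If $\{u,v\}\notin E$, then $u$ and $v$ are disconnected by $\mathrm{Small}(u)$ or by $\mathrm{Small}(v)$ (in particular at least one of them exists). If $\{u,v\}\in E$, then either $\mathrm{Small}(u)$ exists, $v\in\mathrm{Small}(u)$, and deleting the vertex set $\mathrm{Small}(u)\setminus\{v\}$ together with the edge $\{u,v\}$ disconnects $u$ from $v$; or the same holds with the roles of $u$ and $v$ exchanged.
   Context: $G=(V,E)$ is a finite, simple, connected, undirected, non-complete graph with $n=|V|$; $\kappa$ is its vertex connectivity, assumed $\kappa<n/4$. A cut is a set $U\subset V$ whose removal disconnects $G$; a $\kappa$-cut is a cut of size $\kappa$; a side of $U$ is a connected component of the subgraph induced on $V\setminus U$; $\mathrm{Side}_U(x)$ is the side containing $x\notin U$; a set disconnects two vertices if they lie in different sides of it. For vertices $u\neq v$, $\kappa(u,v)$ is the maximum number of internally vertex-disjoint $u$–$v$ paths, equivalently the minimum size of a set consisting of vertices other than $u,v$ and possibly the edge $\{u,v\}$ whose removal disconnects $u$ from $v$. For a vertex $x$ and $t\le\lceil\frac{n-\kappa}{2}\rceil$, $\mathrm{Small}_t(x)$ denotes, when it exists, the unique $\kappa$-cut $Y$ with $x\notin Y$, $|\mathrm{Side}_Y(x)|\le t$, and $\mathrm{Side}_Y(x)\subseteq\mathrm{Side}_U(x)$ for every $\kappa$-cut $U$ with $x\notin U$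 and $|\mathrm{Side}_U(x)|\le t$ (it exists iff some $\kappa$-cut $U$ with $x\notin U$ has $|\mathrm{Side}_U(x)|\le t$). *)

(* Defs.v *)
(* A finite simple graph is a symmetric irreflexive
   relation e on a finType T; the vertex set is T, n = #|T|. *)
From mathcomp Require Import all_boot.
Set Implicit Arguments. Unset Strict Implicit. Unset Printing Implicit Defensive.

Section Graph.
Variable T : finType.
Variable e : rel T.

Definition simple_graph := symmetric e /\ irreflexive e.
Definition graph_connected := forall x y : T, connect e x y.
Definition non_complete := exists x y : T, x != y /\ ~~ e x y.

Definition induced (S : {set T}) : rel T :=
  [rel x y | [&& x \in S, y \in S & e x y]].

Definition same_side (U : {set T}) (x y : T) : bool :=
  [&& x \notin U, y \notin U & connect (induced (~: U)) x y].

Definition disconnects (U : {set T}) (x y : T) : Prop :=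
  x \notin U /\ y \notin U /\ ~~ connect (induced (~: U)) x y.

Definition is_cut (U : {set T}) : Prop :=
  exists x y : T, disconnects U x y.

Definition Side (U : {set T}) (x : T) : {set T} :=
  [set y | same_side U x y].

Definition vertex_connectivity (k : nat) : Prop :=
  (exists U, is_cut U /\ #|U| = k) /\ (forall U, is_cut U -> k <= #|U|).

Definition del_rel (S : {set T}) (b : bool) (u v : T) : rel T :=
  [rel x y | [&& x \notin S, y \notin S, e x y &
     ~~ (b && (((x == u) && (y == v)) || ((x == v) && (y == u))))]].

Definition local_sep (u v : T) (S : {set T}) (b : bool) : Prop :=
  u \notin S /\ v \notin S /\ (b -> e u v) /\ ~~ connect (del_rel S b u v) u v.

Definition local_connectivity (u v : T) (k : nat) : Prop :=
  (exists S b, local_sep u v S b /\ #|S| + b = k) /\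
  (forall S b, local_sep u v S b -> k <= #|S| + b).

Definition is_Small (k t : nat) (x : T) (Y : {set T}) : Prop :=
  [/\ is_cut Y, #|Y| = k, x \notin Y, #|Side Y x| <= t &
      forall U, is_cut U -> #|U| = k -> x \notin U -> #|Side U x| <= t ->
        Side Y x \subset Side U x].

End Graph.

(* Main.v *)
Require Import Defs.
From mathcomp Require Import zify.
From mathcomp Require Import all_boot.
From Stdlib Require Import Classical.
Set Implicit Arguments. Unset Strict Implicit. Unset Printing Implicit Defensive.

Lemma closure (T : finType) (r : rel T) (C : {set T}) :
  (forall a b, a \in C -> r a b -> b \in C) ->
  forall a b, a \in C -> connect r a b -> b \in C.
Proof.
move=> H a b Ha /connectP [p Hp ->]; elim: p a Ha Hp => //= c p IH a Ha /andP[Hac Hp].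
exact: IH (H _ _ Ha Hac) Hp.
Qed.

Lemma side_self (T : finType) (e : rel T) (U : {set T}) x : x \notin U -> x \in Side e U x.
Proof. by move=> hx; rewrite inE /same_side hx connect0. Qed.

Lemma side_notin (T : finType) (e : rel T) (U : {set T}) x y :
  y \in Side e U x -> y \notin U /\ x \notin U.
Proof. by rewrite inE /same_side => /and3P[]. Qed.

Lemma side_step (T : finType) (e : rel T) (U : {set T}) x a b :
  a \in Side e U x -> e a b -> b \notin U -> b \in Side e U x.
Proof.
rewrite !inE /same_side => /and3P[hx ha hc] hab hb.
rewrite hx hb /=; apply: connect_trans hc (connect1 _).
by rewrite /induced /= !inE ha hb hab.
Qed.

Lemma closed_sep (T : finType) (e : rel T) (W C : {set T}) :
  (forall a b, a \in C -> e a b -> b \notin W -> b \in C) ->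
  forall x y, x \in C -> connect (induced e (~: W)) x y -> y \in C.
Proof.
move=> H x y hx; apply: closure hx => a b ha /=.
rewrite /induced /= !inE => /and3P[_ hb hab]; exact: H ha hab hb.
Qed.

Lemma closed_disc (T : finType) (e : rel T) (W C : {set T}) :
  (forall a b, a \in C -> e a b -> b \notin W -> b \in C) ->
  forall x y, x \in C -> y \notin C -> x \notin W -> y \notin W -> disconnects e W x y.
Proof.
move=> H x y hx hy hxW hyW; split=> //; split=> //.
by apply/negP => /(closed_sep H hx); rewrite (negbTE hy).
Qed.

Lemma closed_side (T : finType) (e : rel T) (W C : {set T}) :
  (forall a b, a \in C -> e a b -> b \notin W -> b \in C) ->
  forall x, x \in C -> Side e W x \subset C.
Proof.
move=> H x hx; apply/subsetP => y; rewrite inE /same_side => /and3P[_ _].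
move=> hc; exact: (closed_sep H hx hc).
Qed.

Lemma cut_ge (T : finType) (e : rel T) k (W : {set T}) x y :
  vertex_connectivity e k -> disconnects e W x y -> k <= #|W|.
Proof. by case=> _ H hd; apply: H; exists x, y. Qed.

Lemma ind_csym (T : finType) (e : rel T) (W : {set T}) : symmetric e -> connect_sym (induced e W).
Proof.
move=> hs; apply: sym_connect_sym => a b; rewrite /induced /= hs; exact: andbCA.
Qed.

Lemma cross (T : finType) (e : rel T) k t (U U' : {set T}) x :
  symmetric e -> vertex_connectivity e k -> 2 * t <= #|T| - k + 1 ->
  is_cut e U -> #|U| = k -> is_cut e U' -> #|U'| = k ->
  x \notin U -> x \notin U' -> #|Side e U x| <= t -> #|Side e U' x| <= t ->
  exists W, [/\ is_cut e W, #|W| = k, x \notin W &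
     Side e W x \subset Side e U x :&: Side e U' x].
Proof.
move=> hs hvc ht hcU hkU hcU' hkU' hxU hxU' htU htU'.
set A := Side e U x; set A' := Side e U' x.
set X := U :|: A; set X' := U' :|: A'.
move: htU htU'; rewrite -/A -/A' => htU htU'.
have hAU : forall z, z \in A -> z \notin U by move=> z /side_notin[].
have hAU' : forall z, z \in A' -> z \notin U' by move=> z /side_notin[].
have clA : forall a b, a \in A -> e a b -> b \in X.
  move=> a b ha hab; rewrite inE; case hb: (b \in U) => //=.
  by apply: side_step ha hab _; rewrite hb.
have clA' : forall a b, a \in A' -> e a b -> b \in X'.
  move=> a b ha hab; rewrite inE; case hb: (b \in U') => //=.
  by apply: side_step ha hab _; rewrite hb.
have clB : forall a b, a \notin X -> e a b -> b \notin A.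
  move=> a b ha hab; apply/negP => hb; move: hab; rewrite hs => /(clA _ _ hb).
  by rewrite (negbTE ha).
have clB' : forall a b, a \notin X' -> e a b -> b \notin A'.
  move=> a b ha hab; apply/negP => hb; move: hab; rewrite hs => /(clA' _ _ hb).
  by rewrite (negbTE ha).
have hxA : x \in A := side_self e hxU.
have hxA' : x \in A' := side_self e hxU'.
have [w hw] : exists w, w \notin X.
  case: hcU => y [z [hyU [hzU hyz]]].
  case hy: (y \in A); last by exists y; rewrite inE negb_or hyU hy.
  case hz: (z \in A); last by exists z; rewrite inE negb_or hzU hz.
  move: hy hz; rewrite !inE /same_side => /and3P[_ _ h1] /and3P[_ _ h2].
  rewrite ind_csym // in h1; have := connect_trans h1 h2.
  by rewrite (negbTE hyz).
have cX : #|X| = k + #|A|.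
  rewrite -hkU; have := cardsUI U A.
  have -> : U :&: A = set0.
    by apply/setP => z; rewrite in_setI in_set0; apply/negP => /andP[h1 h2]; rewrite (negbTE (hAU _ h2)) in h1.
  rewrite cards0 /X; lia.
have cX' : #|X'| = k + #|A'|.
  rewrite -hkU'; have := cardsUI U' A'.
  have -> : U' :&: A' = set0.
    by apply/setP => z; rewrite in_setI in_set0; apply/negP => /andP[h1 h2]; rewrite (negbTE (hAU' _ h2)) in h1.
  rewrite cards0 /X'; lia.
set W0 := (X :&: X') :\: (A :&: A').
have cW0 : #|(X :&: X') :&: (A :&: A')| + #|W0| = #|X :&: X'| := cardsID _ _.
have eI : (X :&: X') :&: (A :&: A') = A :&: A'.
  apply/setP => z; rewrite !in_setI !in_setU.
  by case: (z \in U); case: (z \in A); case: (z \in U'); case: (z \in A').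
rewrite eI in cW0.
have hAA : 0 < #|A :&: A'| by apply/card_gt0P; exists x; rewrite in_setI hxA hxA'.
have hAAs : #|A :&: A'| <= #|A| by apply: subset_leq_card; apply: subsetIl.
have cXU := cardsUI X X'.
have cAU := cardsUI A A'.
have bound : #|W0| <= k.
  case: (set_0Vmem (~: X :&: ~: X')) => [h0 | [b hb]].
    have := congr1 (fun s => ~: s) h0; rewrite /= -setCU setCK setC0 => hT.
    have : #|X :|: X'| = #|T| by rewrite hT cardsT.
    lia.
  set W1 := (~: A :&: ~: A') :\: (~: X :&: ~: X').
  have hd : disconnects e W1 b x.
    apply: (@closed_disc _ _ _ (~: X :&: ~: X')) => //.
    - move=> a c; rewrite !in_setI !in_setC => /andP[ha ha'] hac.
      rewrite in_setD !in_setI !in_setC (clB _ _ ha hac) (clB' _ _ ha' hac) andbT.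
      by rewrite andbT negbK.
    - by rewrite in_setI !in_setC in_setU hxA orbT.
    - by rewrite in_setD hb.
    - by rewrite in_setD !in_setI !in_setC hxA andbF.
  have k1 := cut_ge hvc hd.
  have cW1 : #|(~: A :&: ~: A') :&: (~: X :&: ~: X')| + #|W1| = #|~: A :&: ~: A'| := cardsID _ _.
  have eI1 : (~: A :&: ~: A') :&: (~: X :&: ~: X') = ~: X :&: ~: X'.
    apply/setP => z; rewrite !in_setI !in_setC !in_setU.
    by case: (z \in U); case: (z \in A); case: (z \in U'); case: (z \in A').
  rewrite eI1 -!setCU in cW1.
  have c1 := cardsC (X :|: X'); have c2 := cardsC (A :|: A').
  lia.
have hwA : w \notin A :&: A' by rewrite in_setI; move: hw; rewrite in_setU negb_or => /andP[_ /negbTE ->].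
have hd : disconnects e W0 x w.
  apply: (@closed_disc _ _ _ (A :&: A')) => //.
  - move=> a c; rewrite in_setI => /andP[ha ha'] hac.
    rewrite in_setD [c \in X :&: X']in_setI (clA _ _ ha hac) (clA' _ _ ha' hac) andbT.
    by rewrite andbT negbK.
  - by rewrite in_setI hxA hxA'.
  - by rewrite in_setD in_setI hxA hxA'.
  - by rewrite in_setD [w \in X :&: X']in_setI (negbTE hw) andbF.
have k0 := cut_ge hvc hd.
exists W0; split.
- by exists x, w.
- lia.
- by case: hd.
- apply: (@closed_side _ _ _ (A :&: A')) => //; last by rewrite in_setI hxA hxA'.
  move=> a c; rewrite in_setI => /andP[ha ha'] hac.
  rewrite in_setD [c \in X :&: X']in_setI (clA _ _ ha hac) (clA' _ _ ha' hac) andbT.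
  by rewrite andbT negbK.
Qed.

Lemma small_exists (T : finType) (e : rel T) k t x (U : {set T}) :
  symmetric e -> vertex_connectivity e k -> 2 * t <= #|T| - k + 1 ->
  is_cut e U -> #|U| = k -> x \notin U -> #|Side e U x| <= t ->
  exists Y, is_Small e k t x Y.
Proof.
move=> hs hvc ht.
suff: forall m (U0 : {set T}), #|Side e U0 x| <= m -> is_cut e U0 -> #|U0| = k ->
   x \notin U0 -> #|Side e U0 x| <= t -> exists Y, is_Small e k t x Y.
  by move=> H; apply: H (leqnn _).
elim=> [|m IH] U0 Hm hc hk0 hx hS.
  move: Hm; rewrite leqn0 cards_eq0 => /eqP Hm.
  by have := side_self e hx; rewrite Hm in_set0.
case: (classic (exists U', [/\ is_cut e U', #|U'| = k, x \notin U', #|Side e U' x| <= t &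
          ~~ (Side e U0 x \subset Side e U' x)])).
  case=> U' [hc' hk' hx' hS' hn].
  have [W [hcW hkW hxW hsub]] := cross hs hvc ht hc hk0 hc' hk' hx hx' hS hS'.
  apply: (IH W) => //; last first.
    by apply: leq_trans (subset_leq_card hsub) _; apply: leq_trans hS; apply: subset_leq_card; apply: subsetIl.
  have h1 := subset_leq_card hsub.
  have h2 := cardsID (Side e U' x) (Side e U0 x).
  have h3 : 0 < #|Side e U0 x :\: Side e U' x|.
    case/subsetPn: hn => z hz hz'; apply/card_gt0P; exists z; by rewrite in_setD hz' hz.
  lia.
move=> Hno; exists U0; split => // U1 hU hUk hUx hUt.
apply/negPn/negP => hn; apply: Hno; by exists U1.
Qed.

Lemma half_bound (n k t a : nat) : t = uphalf (n - k) -> 2 * a <= n - k + 1 -> a <= t.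
Proof.
move=> -> h; rewrite uphalf_half; have := odd_double_half (n - k); rewrite -muln2.
have := leq_b1 (odd (n - k)); lia.
Qed.

Lemma half_bound2 (n k t : nat) : t = uphalf (n - k) -> 2 * t <= n - k + 1.
Proof.
move=> ->; rewrite uphalf_half; have := odd_double_half (n - k); rewrite -muln2.
have := leq_b1 (odd (n - k)); lia.
Qed.

Lemma nonadj_case (T : finType) (e : rel T) k t (S : {set T}) x y :
  symmetric e -> vertex_connectivity e k -> 2 * t <= #|T| - k + 1 ->
  disconnects e S x y -> #|S| = k -> #|Side e S x| <= t ->
  (exists Y, is_Small e k t x Y) /\
  (forall Y, is_Small e k t x Y -> disconnects e Y x y).
Proof.
move=> hs hvc ht hd hk hSt.
have hcS : is_cut e S by exists x, y.
have [hxS [hyS hnc]] := hd.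
split; first exact: small_exists hs hvc ht hcS hk hxS hSt.
move=> Y [hcY hkY hxY hYt hmin].
have sub := hmin S hcS hk hxS hSt.
have hyside : y \notin Side e S x.
  by rewrite inE /same_side hxS hyS.
have hyY : y \notin Y.
  apply/negP => hyY.
  case: (boolP [exists a in Side e Y x, e a y]).
    case/exists_inP => a ha hay.
    have := side_step (subsetP sub _ ha) hay hyS; by rewrite (negbTE hyside).
  move=> hno.
  have hd' : disconnects e (Y :\ y) x y.
    apply: (@closed_disc _ _ _ (Side e Y x)).
    - move=> a b ha hab; rewrite in_setD1 negb_and negbK.
      case/orP => [/eqP hb | hb]; last exact: side_step ha hab hb.
      subst b; move/negP: hno; case; apply/exists_inP; by exists a.
    - exact: side_self.
    - by apply/negP => /side_notin []; rewrite hyY.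
    - by rewrite in_setD1 negb_and hxY orbT.
    - by rewrite in_setD1 eqxx.
  have := cut_ge hvc hd'; have := cardsD1 y Y; rewrite hyY; lia.
split => //; split => //; apply/negP => hc.
have : y \in Side e Y x by rewrite inE /same_side hxY hyY hc.
by move/(subsetP sub); rewrite (negbTE hyside).
Qed.

Lemma adj_case (T : finType) (e : rel T) k t (S : {set T}) x y :
  symmetric e -> vertex_connectivity e k -> 2 * t <= #|T| - k + 1 ->
  (forall a, 2 * a <= #|T| - k + 1 -> a <= t) -> 4 * k < #|T| ->
  x != y -> e x y -> x \notin S -> y \notin S -> #|S| + 1 = k ->
  ~~ connect (del_rel e S true x y) x y ->
  2 * #|[set z | connect (del_rel e S true x y) x z]| <= #|T| - k + 1 ->
  (exists Y, is_Small e k t x Y) /\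
  (forall Y, is_Small e k t x Y ->
     y \in Y /\ ~~ connect (del_rel e (Y :\ y) true x y) x y).
Proof.
move=> hs hvc ht hhalf hn hxy hexy hxS hyS hk hnc hC.
set H := del_rel e S true x y.
set Cx := [set z | connect H x z].
move: hC hnc; rewrite -/H -/Cx => hC hnc.
have Cnot : forall z, z \in Cx -> z \notin S.
  move=> z; rewrite inE => hz.
  have hcl : forall a b, a \in ~: S -> H a b -> b \in ~: S.
    by move=> a b _; rewrite /H /del_rel /= in_setC => /and4P[].
  rewrite -in_setC; apply: (closure hcl _ hz); by rewrite in_setC.
have hyC : y \notin Cx by rewrite inE.
have hxC : x \in Cx by rewrite inE connect0.
set Y' := y |: S.
have clC : forall a b, a \in Cx -> e a b -> b \notin Y' -> b \in Cx.
  move=> a b ha hab; rewrite in_setU1 negb_or => /andP[hby hbS].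
  move: (ha); rewrite !inE => ha'; apply: connect_trans ha' (connect1 _).
  rewrite /H /del_rel /= (Cnot _ ha) hbS hab /= (negbTE hby) andbF /=.
  have -> : (a == y) = false by apply/negbTE; apply/negP => /eqP ?; subst a; rewrite ha in hyC.
  by [].
have hkY' : #|Y'| = k by rewrite cardsU1 hyS; lia.
have hCt := hhalf _ hC.
have [w _ hw] : exists2 w, w \in [set: T] & w \notin Cx :|: Y'.
  apply/subsetPn; apply/negP => /subset_leq_card; rewrite cardsT.
  case: (leq_card_setU Cx Y') => ? _; lia.
have hxY' : x \notin Y' by rewrite in_setU1 negb_or hxy hxS.
have hd : disconnects e Y' x w.
  move: hw; rewrite in_setU negb_or => /andP[hwC hwY].
  exact: (closed_disc clC).
have hcY' : is_cut e Y' by exists x, w.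
have subY' := closed_side clC hxC.
have hY't : #|Side e Y' x| <= t := leq_trans (subset_leq_card subY') hCt.
split; first exact: small_exists hs hvc ht hcY' hkY' hxY' hY't.
move=> Y [hcY hkY hxY hYt hmin].
have sub : Side e Y x \subset Cx := subset_trans (hmin Y' hcY' hkY' hxY' hY't) subY'.
have hyY : y \in Y.
  apply/negPn/negP => hyY.
  have := side_step (side_self e hxY) hexy hyY.
  by move/(subsetP sub); rewrite (negbTE hyC).
split => //.
apply/negP => /(@closure _ _ (Side e Y x)) H'.
have : y \in Side e Y x.
  apply: H' (side_self e hxY) => a b ha.
  rewrite /del_rel /= => /and4P[_ hb1 hab hcond].
  move: hb1; rewrite in_setD1 negb_and negbK => hb1.
  case hby: (b == y).
    move/eqP: hby => hby; subst b.
    have hax : (a == x) = false.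
      by apply/negbTE; apply: contraNN hcond => /eqP ->; rewrite !eqxx.
    have : y \in Cx.
      move: (subsetP sub _ ha); rewrite !inE => ha'; apply: connect_trans ha' (connect1 _).
      rewrite /H /del_rel /= (Cnot _ (subsetP sub _ ha)) hyS hab hax /=.
      by rewrite [y == x]eq_sym (negbTE hxy) andbF.
    by rewrite (negbTE hyC).
  rewrite hby /= in hb1; exact: side_step ha hab hb1.
by move/side_notin => []; rewrite hyY.
Qed.

Lemma del_sym (T : finType) (e : rel T) (S : {set T}) u v :
  del_rel e S true u v =2 del_rel e S true v u.
Proof.
move=> a c; rewrite /del_rel /=.
by case: (a == u); case: (a == v); case: (c == u); case: (c == v); rewrite /= ?andbT ?andbF ?orbF ?orbT.
Qed.

Lemma del_csym (T : finType) (e : rel T) (S : {set T}) b u v :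
  symmetric e -> connect_sym (del_rel e S b u v).
Proof.
move=> hs; apply: sym_connect_sym => a c; rewrite /del_rel /= hs.
by case: (a \in S); case: (c \in S); case: (e c a); case: b; case: (a == u); case: (a == v); case: (c == u); case: (c == v).
Qed.

Lemma del_notin (T : finType) (e : rel T) (S : {set T}) b u v x z :
  x \notin S -> connect (del_rel e S b u v) x z -> z \notin S.
Proof.
move=> hx hz.
have hcl : forall a c, a \in ~: S -> del_rel e S b u v a c -> c \in ~: S.
  by move=> a c _; rewrite /del_rel /= in_setC => /and4P[].
rewrite -in_setC; apply: (closure hcl _ hz); by rewrite in_setC.
Qed.

Lemma disc_sym (T : finType) (e : rel T) (W : {set T}) x y :
  symmetric e -> disconnects e W x y -> disconnects e W y x.
Proof. by move=> hs [h1 [h2 h3]]; split=> //; split=> //; rewrite ind_csym. Qed.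

Lemma comps_bound (T : finType) (r : rel T) (S : {set T}) x y :
  connect_sym r -> ~~ connect r x y ->
  (forall z, connect r x z -> z \notin S) -> (forall z, connect r y z -> z \notin S) ->
  #|[set z | connect r x z]| + #|[set z | connect r y z]| + #|S| <= #|T|.
Proof.
move=> hs hnc hx hy.
have hdisj : [set z | connect r x z] :&: [set z | connect r y z] = set0.
  apply/setP => z; rewrite in_setI in_set0 !inE; apply/negP => /andP[h1 h2].
  rewrite hs in h2; have := connect_trans h1 h2; by rewrite (negbTE hnc).
have hsub : [set z | connect r x z] :|: [set z | connect r y z] \subset ~: S.
  apply/subsetP => z; rewrite in_setU in_setC !inE => /orP[/hx | /hy] //.
have := cardsUI [set z | connect r x z] [set z | connect r y z]; rewrite hdisj cards0.
have := subset_leq_card hsub; have := cardsC S; lia.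
Qed.

Theorem lemma7 (T : finType) (e : rel T) (k : nat) (u v : T) :
  simple_graph e -> graph_connected e -> non_complete e ->
  vertex_connectivity e k -> 4 * k < #|T| ->
  u != v -> local_connectivity e u v k ->
  let t := uphalf (#|T| - k) in
  (~~ e u v ->
     ((exists Y, is_Small e k t u Y) /\
        (forall Y, is_Small e k t u Y -> disconnects e Y u v)) \/
     ((exists Y, is_Small e k t v Y) /\
        (forall Y, is_Small e k t v Y -> disconnects e Y u v))) /\
  (e u v ->
     ((exists Y, is_Small e k t u Y) /\
        (forall Y, is_Small e k t u Y ->
           v \in Y /\ ~~ connect (del_rel e (Y :\ v) true u v) u v)) \/
     ((exists Y, is_Small e k t v Y) /\
        (forall Y, is_Small e k t v Y ->
           u \in Y /\ ~~ connect (del_rel e (Y :\ u) true v u) v u))).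
Proof.
move=> [hs hirr] _ _ hvc hn huv [[S [b [hsep hsz]]] _] t.
have htt : t = uphalf (#|T| - k) by [].
have ht : 2 * t <= #|T| - k + 1 by apply: half_bound2.
have hh : forall a, 2 * a <= #|T| - k + 1 -> a <= t by move=> a; apply: half_bound.
case: hsep => huS [hvS [hb hnc]].
split => [hnuv | huv'].
  case: b hb hnc hsz => [/(_ isT) h | _ hnc hsz]; first by rewrite h in hnuv.
  have Heq : del_rel e S false u v =2 induced e (~: S).
    by move=> a c; rewrite /del_rel /induced /= !in_setC andbT.
  rewrite (eq_connect Heq) in hnc.
  have hd : disconnects e S u v by [].
  have hk : #|S| = k by move: hsz => /=; lia.
  have hsu : #|Side e S u| <= #|[set z | connect (induced e (~: S)) u z]|.
    by apply: subset_leq_card; apply/subsetP => z; rewrite !inE /same_side => /and3P[].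
  have hsv : #|Side e S v| <= #|[set z | connect (induced e (~: S)) v z]|.
    by apply: subset_leq_card; apply/subsetP => z; rewrite !inE /same_side => /and3P[].
  have hnot : forall x z, x \notin S -> connect (induced e (~: S)) x z -> z \notin S.
    move=> x z hx hz; rewrite -in_setC; apply: (closure _ _ hz); last by rewrite in_setC.
    by move=> a c _; rewrite /induced /= => /and3P[].
  have := comps_bound (ind_csym (~: S) hs) hnc (fun z => hnot u z huS) (fun z => hnot v z hvS).
  move=> hb2.
  have [h|h] : 2 * #|Side e S u| <= #|T| - k + 1 \/ 2 * #|Side e S v| <= #|T| - k + 1 by lia.
    by left; exact: nonadj_case hs hvc ht hd hk (hh _ h).
  right; have [h1 h2] := nonadj_case hs hvc ht (disc_sym hs hd) hk (hh _ h).
  by split => // Y /h2 /(disc_sym hs).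
case: b hb hnc hsz => [_ hnc hsz | _ hnc hsz].
  have hk : #|S| + 1 = k by move: hsz => /=.
  have Heq := eq_connect (del_sym e S u v).
  have hnc' : ~~ connect (del_rel e S true v u) v u.
    by rewrite -Heq del_csym.
  have := comps_bound (del_csym S true u v hs) hnc (fun z => del_notin huS) (fun z => del_notin hvS).
  move=> hb2.
  have hcv : #|[set z | connect (del_rel e S true v u) v z]| = #|[set z | connect (del_rel e S true u v) v z]|.
    by apply: eq_card => z; rewrite !inE Heq.
  have [h|h] : 2 * #|[set z | connect (del_rel e S true u v) u z]| <= #|T| - k + 1 \/
               2 * #|[set z | connect (del_rel e S true v u) v z]| <= #|T| - k + 1 by lia.
    by left; exact: adj_case hs hvc ht hh hn huv huv' huS hvS hk hnc h.
  right; apply: (adj_case hs hvc ht hh hn _ _ hvS huS hk hnc' h).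
    by rewrite eq_sym.
  by rewrite hs.
exfalso; move/negP: hnc; apply; apply: connect1.
by rewrite /del_rel /= huS hvS huv'.
Qed.
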